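(* There exists a geodesic triangle in $\mathbf{Sol}$ with three distinct vertices in $\mathbf{Sol}$, not lying on a common geodesic, whose interior angle sum is exactly $\pi$.
   Context: $\mathbf{Sol}$ is $\mathbb{R}^3$ with coordinates $(x,y,z)$, with group law $(a,b,c)(x,y,z)=(x+ae^{-z},\,y+be^{z},\,z+c)$ and left-invariant Riemannian metric $ds^2=e^{2z}dx^2+e^{-2z}dy^2+dz^2$. A geodesic triangle consists of three points (vertices) and geodesic segments (sides) joining them pairwise; the interior angle at a vertex is the angle, measured with the Riemannian metric at that vertex, between the initial tangent vectors of the two sides issuing from that vertex. *)

(* Defs.v *)
From Stdlib Require Import Reals.
Open Scope R_scope.

Definition pt := (R * R * R)%type.
Definition px (p : pt) : R := fst (fst p).
Definition py (p : pt) : R := snd (fst p).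
Definition pz (p : pt) : R := snd p.

Definition sol_inner (p u v : pt) : R :=
  exp (2 * pz p) * px u * px v + exp (- (2 * pz p)) * py u * py v + pz u * pz v.

Definition sol_norm (p u : pt) : R := sqrt (sol_inner p u u).

Definition sol_angle (p u v : pt) : R :=
  acos (sol_inner p u v / (sol_norm p u * sol_norm p v)).

(* A curve t |-> (cx t, cy t, cz t) defined on all of R, together with its
   velocity components (the velocity is pinned down by IsGeodesic below). *)
Record curve := Curve {
  cx : R -> R; cy : R -> R; cz : R -> R;
  vx : R -> R; vy : R -> R; vz : R -> R }.

Definition at_time (g : curve) (t : R) : pt := (cx g t, cy g t, cz g t).
Definition vel (g : curve) (t : R) : pt := (vx g t, vy g t, vz g t).

(* Geodesic equations of Sol (Euler-Lagrange for the metric above):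
     x'' + 2 z' x' = 0,  y'' - 2 z' y' = 0,  z'' = e^{2z} x'^2 - e^{-2z} y'^2. *)
Definition IsGeodesic (g : curve) : Prop :=
  exists ax ay az : R -> R,
  forall t : R,
    derivable_pt_lim (cx g) t (vx g t) /\
    derivable_pt_lim (cy g) t (vy g t) /\
    derivable_pt_lim (cz g) t (vz g t) /\
    derivable_pt_lim (vx g) t (ax t) /\
    derivable_pt_lim (vy g) t (ay t) /\
    derivable_pt_lim (vz g) t (az t) /\
    ax t + 2 * vz g t * vx g t = 0 /\
    ay t - 2 * vz g t * vy g t = 0 /\
    az t = exp (2 * cz g t) * (vx g t) ^ 2 - exp (- (2 * cz g t)) * (vy g t) ^ 2.

(* A geodesic segment from p to q: restriction to [0,1] of a (complete)
   geodesic g with g(0) = p, g(1) = q. *)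
Definition GeodSegment (g : curve) (p q : pt) : Prop :=
  IsGeodesic g /\ at_time g 0 = p /\ at_time g 1 = q.

Definition OnCommonGeodesic (p q r : pt) : Prop :=
  exists (g : curve) (t1 t2 t3 : R), IsGeodesic g /\
    at_time g t1 = p /\ at_time g t2 = q /\ at_time g t3 = r.

(* Interior angle sum of the triangle with sides a : p->q, b : q->r, c : r->p.
   Initial tangent of a side issuing from a vertex where it ends is -g'(1). *)
Definition neg (u : pt) : pt := (- px u, - py u, - pz u).

Definition angle_sum (p q r : pt) (a b c : curve) : R :=
  sol_angle p (vel a 0) (neg (vel c 1)) +
  sol_angle q (vel b 0) (neg (vel a 1)) +
  sol_angle r (vel c 0) (neg (vel b 1)).

(* Main.v *)
Require Import Defs.
From Stdlib Require Import Reals Lra Psatz.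
From Coquelicot Require Import Coquelicot.
Require Import Defs.
Open Scope R_scope.

Definition EE (E0 d s : R) := E0 * exp (d * s).

Lemma EE_pos E0 d s : 0 < E0 -> 0 < EE E0 d s.
Proof. intros; unfold EE; apply Rmult_lt_0_compat; auto; apply exp_pos. Qed.

(* arc in the plane x = X : (y, e^z) on semicircle center M radius Rr *)
Definition arcYZ (X M Rr E0 d : R) : curve := {|
  cx := fun _ => X;
  cy := fun s => M + Rr * ((EE E0 d s)^2 - 1)/((EE E0 d s)^2+1);
  cz := fun s => ln (2*Rr*EE E0 d s/((EE E0 d s)^2+1));
  vx := fun _ => 0;
  vy := fun s => 4*Rr*d*(EE E0 d s)^2/((EE E0 d s)^2+1)^2;
  vz := fun s => d*(1-(EE E0 d s)^2)/(1+(EE E0 d s)^2) |}.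

Definition arcXZ (Y M Rr E0 d : R) : curve := {|
  cx := fun s => M + Rr * ((EE E0 d s)^2 - 1)/((EE E0 d s)^2+1);
  cy := fun _ => Y;
  cz := fun s => - ln (2*Rr*EE E0 d s/((EE E0 d s)^2+1));
  vx := fun s => 4*Rr*d*(EE E0 d s)^2/((EE E0 d s)^2+1)^2;
  vy := fun _ => 0;
  vz := fun s => - (d*(1-(EE E0 d s)^2)/(1+(EE E0 d s)^2)) |}.

Lemma exp_2ln x : 0 < x -> exp (2 * ln x) = x^2.
Proof. intros H. replace (2 * ln x) with (ln x + ln x) by ring.
 rewrite exp_plus, exp_ln; auto; ring. Qed.

Lemma exp_m2ln x : 0 < x -> exp (- (2 * ln x)) = / x^2.
Proof. intros H. rewrite exp_Ropp, exp_2ln; auto. Qed.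

Lemma arcYZ_geod X M Rr E0 d : 0 < Rr -> 0 < E0 -> IsGeodesic (arcYZ X M Rr E0 d).
Proof.
 intros HR H0.
 exists (fun _ => 0),
   (fun s => 8*Rr*d^2*(EE E0 d s)^2*(1-(EE E0 d s)^2)/((EE E0 d s)^2+1)^3),
   (fun s => -4*d^2*(EE E0 d s)^2/(1+(EE E0 d s)^2)^2).
 intros s. simpl. pose proof (EE_pos E0 d s H0) as HE.
 assert (Hq : 0 < 2 * Rr * EE E0 d s / (EE E0 d s ^ 2 + 1)).
 { apply Rdiv_lt_0_compat; nra. }
 repeat split.
 - apply is_derive_Reals. auto_derive. auto. ring.
 - apply is_derive_Reals. unfold EE. auto_derive. unfold EE in HE. nra.
   unfold EE in *. field. nra.
 - apply is_derive_Reals. unfold EE. auto_derive. unfold EE in *. repeat split; try nra; try (apply Rmult_lt_0_compat; [nra| apply Rinv_0_lt_compat; nra]).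
   unfold EE in *. field. repeat split; nra.
 - apply is_derive_Reals. auto_derive. auto. ring.
 - apply is_derive_Reals. unfold EE. auto_derive. unfold EE in HE. nra.
   unfold EE in *. field. nra.
 - apply is_derive_Reals. unfold EE. auto_derive. unfold EE in HE. nra.
   unfold EE in *. field. nra.
 - ring.
 - field. nra.
 - rewrite exp_m2ln by auto. field. split; nra.
Qed.

Lemma arcXZ_geod Y M Rr E0 d : 0 < Rr -> 0 < E0 -> IsGeodesic (arcXZ Y M Rr E0 d).
Proof.
 intros HR H0.
 exists (fun s => 8*Rr*d^2*(EE E0 d s)^2*(1-(EE E0 d s)^2)/((EE E0 d s)^2+1)^3),
   (fun _ => 0),
   (fun s => 4*d^2*(EE E0 d s)^2/(1+(EE E0 d s)^2)^2).
 intros s. simpl. pose proof (EE_pos E0 d s H0) as HE.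
 assert (Hq : 0 < 2 * Rr * EE E0 d s / (EE E0 d s ^ 2 + 1)).
 { apply Rdiv_lt_0_compat; nra. }
 repeat split.
 - apply is_derive_Reals. unfold EE. auto_derive. unfold EE in HE. nra.
   unfold EE in *. field. nra.
 - apply is_derive_Reals. auto_derive. auto. ring.
 - apply is_derive_Reals. unfold EE. auto_derive. unfold EE in *. repeat split; try nra; try (apply Rmult_lt_0_compat; [nra| apply Rinv_0_lt_compat; nra]).
   unfold EE in *. field. repeat split; nra.
 - apply is_derive_Reals. unfold EE. auto_derive. unfold EE in HE. nra.
   unfold EE in *. field. nra.
 - apply is_derive_Reals. auto_derive. auto. ring.
 - apply is_derive_Reals. unfold EE. auto_derive. unfold EE in HE. nra.
   unfold EE in *. field. nra.
 - field. nra.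
 - ring.
 - replace (2 * - ln (2 * Rr * EE E0 d s / (EE E0 d s ^ 2 + 1)))
     with (- (2 * ln (2 * Rr * EE E0 d s / (EE E0 d s ^ 2 + 1)))) by ring.
   match goal with |- context [exp (2 * - ln ?q)] =>
     replace (2 * - ln q) with (-(2 * ln q)) by ring;
     rewrite (exp_m2ln q) by (apply Rdiv_lt_0_compat; nra) end.
   field. split; nra.
Qed.

Definition mkder (f f' : R -> R) (H : forall s, derivable_pt_lim f s (f' s)) : derivable f :=
  fun x => exist _ (f' x) (H x).

Lemma mvt_gen f f' (H : forall s, derivable_pt_lim f s (f' s)) x y : x < y ->
  exists c, f y - f x = f' c * (y - x).
Proof.
 intros Hxy. destruct (MVT_cor1 f x y (mkder f f' H) Hxy) as [c [Hc _]].
 exists c. rewrite Hc. f_equal.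
Qed.

Lemma const_der f f' (H : forall s, derivable_pt_lim f s (f' s)) :
  (forall s, f' s = 0) -> forall x y, f x = f y.
Proof.
 intros H0 x y. destruct (Rtotal_order x y) as [h|[h|h]].
 - destruct (mvt_gen f f' H x y h) as [c Hc]. rewrite H0 in Hc. lra.
 - subst; auto.
 - destruct (mvt_gen f f' H y x h) as [c Hc]. rewrite H0 in Hc. lra.
Qed.

Lemma zero_der f f' (H : forall s, derivable_pt_lim f s (f' s)) x y :
  f x = f y -> x <> y -> exists c, f' c = 0.
Proof.
 intros He Hn. destruct (Rtotal_order x y) as [h|[h|h]].
 - destruct (mvt_gen f f' H x y h) as [c Hc]. exists c.
   assert (f' c * (y - x) = 0) by lra.
   apply Rmult_integral in H0. destruct H0; auto. lra.
 - contradiction.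
 - destruct (mvt_gen f f' H y x h) as [c Hc]. exists c.
   assert (f' c * (x - y) = 0) by lra.
   apply Rmult_integral in H0. destruct H0; auto. lra.
Qed.

Lemma x_rigid g t1 t2 t3 : IsGeodesic g -> cx g t2 = cx g t3 -> t2 <> t3 ->
  cx g t1 = cx g t2.
Proof.
 intros [ax [ay [az H]]] Heq Hn.
 assert (Hx : forall s, derivable_pt_lim (cx g) s (vx g s)) by (intros s; apply H).
 destruct (zero_der _ _ Hx t2 t3 Heq Hn) as [c Hc].
 set (C := fun s => vx g s * exp (2 * cz g s)).
 assert (HC : forall s, derivable_pt_lim C s 0).
 { intros s. destruct (H s) as [_ [_ [Hz [Hvx [_ [_ [Ea _]]]]]]].
   assert (Hz2 : derivable_pt_lim (fun s => 2 * cz g s) s (2 * vz g s)).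
   { apply (derivable_pt_lim_scal (cz g) 2 s). exact Hz. }
   assert (He : derivable_pt_lim (fun s => exp (2 * cz g s)) s
              (exp (2 * cz g s) * (2 * vz g s))).
   { apply (derivable_pt_lim_comp (fun s => 2 * cz g s) exp s).
     exact Hz2. apply derivable_pt_lim_exp. }
   pose proof (derivable_pt_lim_mult (vx g) (fun s => exp (2 * cz g s)) s _ _ Hvx He) as HM.
   unfold mult_fct in HM.
   replace 0 with (ax s * exp (2 * cz g s) + vx g s * (exp (2 * cz g s) * (2 * vz g s))).
   2:{ replace (ax s) with (- (2 * vz g s * vx g s)) by lra. ring. }
   exact HM. }
 assert (Hv0 : forall s, vx g s = 0).
 { intros s. pose proof (const_der C (fun _ => 0) HC (fun _ => eq_refl) s c) as E.
   unfold C in E. rewrite Hc, Rmult_0_l in E.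
   pose proof (exp_pos (2 * cz g s)).
   apply Rmult_integral in E. destruct E; auto. lra. }
 apply (const_der _ _ Hx Hv0).
Qed.

Lemma acos_le_half x : 0 <= x <= 1 -> acos x <= PI/2.
Proof.
 intros Hx. destruct (Rle_lt_dec (acos x) (PI/2)) as [h|h]; auto.
 exfalso. pose proof (acos_bound x).
 assert (cos (acos x) < 0).
 { apply cos_lt_0; [lra|]. pose proof PI_RGT_0. lra. }
 rewrite cos_acos in H0 by lra. lra.
Qed.

Lemma acos3 al be ga : 0 <= al <= 1 -> 0 <= be <= 1 -> -1 <= ga <= 1 ->
  al * be - sqrt (1 - al²) * sqrt (1 - be²) = - ga ->
  acos al + acos be + acos ga = PI.
Proof.
 intros Ha Hb Hg H.
 pose proof (acos_le_half al Ha). pose proof (acos_le_half be Hb).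
 pose proof (acos_bound al). pose proof (acos_bound be).
 assert (Hc : cos (acos al + acos be) = - ga).
 { rewrite cos_plus, !cos_acos, !sin_acos by lra. exact H. }
 assert (acos (cos (acos al + acos be)) = acos al + acos be).
 { apply acos_cos. lra. }
 rewrite Hc, acos_opp in H4. lra.
Qed.

Definition sc (l : R) (v : pt) : pt := (l * px v, l * py v, l * pz v).

Lemma sqrt_sc l x : 0 < l -> 0 <= x -> sqrt (l * l * x) = l * sqrt x.
Proof. intros. rewrite sqrt_mult by nra. rewrite sqrt_square by lra. auto. Qed.

Lemma angle_sc P0 U V l1 l2 : 0 < l1 -> 0 < l2 ->
  0 < sol_inner P0 U U -> 0 < sol_inner P0 V V ->
  sol_angle P0 (sc l1 U) (sc l2 V) = sol_angle P0 U V.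
Proof.
 intros H1 H2 HU HV. unfold sol_angle, sol_norm.
 assert (E1 : sol_inner P0 (sc l1 U) (sc l2 V) = l1 * l2 * sol_inner P0 U V)
   by (unfold sol_inner, sc, px, py, pz; simpl; ring).
 assert (E2 : sol_inner P0 (sc l1 U) (sc l1 U) = l1 * l1 * sol_inner P0 U U)
   by (unfold sol_inner, sc, px, py, pz; simpl; ring).
 assert (E3 : sol_inner P0 (sc l2 V) (sc l2 V) = l2 * l2 * sol_inner P0 V V)
   by (unfold sol_inner, sc, px, py, pz; simpl; ring).
 rewrite E1, E2, E3, !sqrt_sc by lra. f_equal.
 pose proof (sqrt_lt_R0 _ HU). pose proof (sqrt_lt_R0 _ HV).
 field. repeat split; lra.
Qed.

Lemma EE0 E0 d : EE E0 d 0 = E0.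
Proof. unfold EE. rewrite Rmult_0_r, exp_0. ring. Qed.
Lemma EE1 E0 E1 : 0 < E0 -> 0 < E1 -> EE E0 (ln (E1/E0)) 1 = E1.
Proof. intros. unfold EE. rewrite Rmult_1_r, exp_ln. field. lra.
 apply Rdiv_lt_0_compat; auto. Qed.


Definition a := sqrt (3/2).
Definition b := sqrt (5/2).
Lemma Ha : a*a = 3/2. Proof. apply sqrt_sqrt. lra. Qed.
Lemma Hb : b*b = 5/2. Proof. apply sqrt_sqrt. lra. Qed.
Lemma pa2 : a^2 = 3/2. Proof. rewrite <- Ha; ring. Qed.
Lemma pa3 : a^3 = 3/2*a. Proof. rewrite <- Ha; ring. Qed.
Lemma pa4 : a^4 = 9/4. Proof. replace (a^4) with ((a*a)*(a*a)) by ring. rewrite Ha; lra. Qed.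
Lemma pb2 : b^2 = 5/2. Proof. rewrite <- Hb; ring. Qed.
Lemma pb3 : b^3 = 5/2*b. Proof. rewrite <- Hb; ring. Qed.
Lemma pb4 : b^4 = 25/4. Proof. replace (b^4) with ((b*b)*(b*b)) by ring. rewrite Hb; lra. Qed.
Ltac redab := unfold Rdiv; ring_simplify; rewrite ?pa4, ?pa3, ?pa2, ?pb4, ?pb3, ?pb2; ring_simplify; try lra.

Lemma a_bd : 1.2247 < a < 1.2248.
Proof. pose proof Ha. assert (0 <= a) by (apply sqrt_pos). split; nra. Qed.
Lemma b_bd : 1.5811 < b < 1.5812.
Proof. pose proof Hb. assert (0 <= b) by (apply sqrt_pos). split; nra. Qed.

Definition k := 3*a/2 - b.
Definition n := 3*a/2 + b.
Definition m := -a/2 + b.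
Definition P := -a/2 - b.
Definition u := b - a.
Definition Rb := sqrt (1 + k^2).
Definition Rc := sqrt (1 + n^2).

Lemma HRb : Rb * Rb = 1 + k^2. Proof. apply sqrt_sqrt. nra. Qed.
Lemma HRc : Rc * Rc = 1 + n^2. Proof. apply sqrt_sqrt. nra. Qed.
Lemma F2 : u^2 + m^2 = 1 + k^2. Proof. unfold u, m, k. redab. Qed.
Lemma F3 : u^2 * (1 + n^2 - P^2) = 1. Proof. unfold u, n, P. redab. Qed.
Lemma F4 : - P * m = 17/8. Proof. unfold P, m. redab. Qed.
Lemma F6n : 1 + 2*n^2 = (3 + a*b)^2. Proof. unfold n. redab. Qed.
Lemma F6k : 1 + 2*k^2 = (3 - a*b)^2. Proof. unfold k. redab. Qed.

Lemma u_bd : 0.3563 < u < 0.3565. Proof. unfold u. pose proof a_bd; pose proof b_bd; lra. Qed.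
Lemma Rb_bd : 1.032 < Rb < 1.0324.
Proof. pose proof HRb. assert (0 <= Rb) by apply sqrt_pos. pose proof a_bd; pose proof b_bd.
 unfold k in *. split; nra. Qed.
Lemma Rc_bd : 3.56 < Rc < 3.563.
Proof. pose proof HRc. assert (0 <= Rc) by apply sqrt_pos. pose proof a_bd; pose proof b_bd.
 unfold n in *. split; nra. Qed.

Definition Ca : curve := {| cx := fun s => a*s; cy := fun s => a*s; cz := fun _ => 0;
  vx := fun _ => a; vy := fun _ => a; vz := fun _ => 0 |}.
Definition E0b := Rb + k.
Definition E1b := (Rb - m) / u.
Definition db := ln (E1b / E0b).
Definition Cb := arcYZ a m Rb E0b db.
Definition E0c := u * (Rc + P).
Definition E1c := Rc - n.
Definition dc := ln (E1c / E0c).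
Definition Cc := arcXZ 0 n Rc E0c dc.
Definition p0 : pt := (0,0,0).
Definition q0 : pt := (a,a,0).
Definition r0 : pt := (a,0,ln u).

Lemma nums : 0.255 < k < 0.257 /\ 3.417 < n < 3.419 /\ 0.968 < m < 0.97 /\ -2.195 < P < -2.192.
Proof. pose proof a_bd; pose proof b_bd. unfold k,n,m,P. lra. Qed.

Lemma E0b_pos : 0 < E0b. Proof. unfold E0b. pose proof nums; pose proof Rb_bd; lra. Qed.
Lemma E1b_pos : 0 < E1b. Proof. unfold E1b. pose proof nums; pose proof Rb_bd; pose proof u_bd.
 apply Rdiv_lt_0_compat; lra. Qed.
Lemma E0c_pos : 0 < E0c. Proof. unfold E0c. pose proof nums; pose proof Rc_bd; pose proof u_bd. nra. Qed.
Lemma E1c_pos : 0 < E1c. Proof. unfold E1c. pose proof nums; pose proof Rc_bd. 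
 pose proof HRc. nra. Qed.
Lemma db_neg : db < 0.
Proof. unfold db. rewrite <- ln_1. apply ln_increasing.
 apply Rdiv_lt_0_compat; [apply E1b_pos|apply E0b_pos].
 pose proof E0b_pos. apply (Rmult_lt_reg_r E0b); auto. unfold Rdiv. rewrite Rmult_assoc, Rinv_l by lra.
 unfold E1b, E0b. pose proof nums; pose proof Rb_bd; pose proof u_bd.
 apply (Rmult_lt_reg_r u); [lra|]. unfold Rdiv. rewrite Rmult_1_r, Rmult_1_l, Rmult_assoc, Rinv_l by lra. nra.
Qed.
Lemma dc_neg : dc < 0.
Proof. unfold dc. rewrite <- ln_1. apply ln_increasing.
 apply Rdiv_lt_0_compat; [apply E1c_pos|apply E0c_pos].
 pose proof E0c_pos. apply (Rmult_lt_reg_r E0c); auto. unfold Rdiv. rewrite Rmult_assoc, Rinv_l by lra.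
 unfold E1c, E0c. pose proof nums; pose proof Rc_bd; pose proof u_bd. pose proof HRc. nra.
Qed.

Lemma Ca_geod : IsGeodesic Ca.
Proof.
 exists (fun _ => 0), (fun _ => 0), (fun _ => 0). intros s; simpl.
 repeat split; try (apply is_derive_Reals; auto_derive; auto; ring).
 - ring. - ring. - rewrite Rmult_0_r, Ropp_0, exp_0. ring.
Qed.

Lemma pt_eq (x1 y1 z1 x2 y2 z2 : R) : x1 = x2 -> y1 = y2 -> z1 = z2 -> (x1,y1,z1) = (x2,y2,z2).
Proof. intros; subst; auto. Qed.

Lemma segA : GeodSegment Ca p0 q0.
Proof. split; [apply Ca_geod|]. split; unfold at_time, p0, q0; simpl; apply pt_eq; ring. Qed.

Lemma Rb_pos : 0 < Rb. Proof. pose proof Rb_bd; lra. Qed.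
Lemma Rc_pos : 0 < Rc. Proof. pose proof Rc_bd; lra. Qed.
Lemma u_pos : 0 < u. Proof. pose proof u_bd; lra. Qed.

Lemma b0s : E0b^2 + 1 = 2*Rb*E0b /\ E0b^2 - 1 = 2*k*E0b.
Proof. unfold E0b. pose proof HRb. split; nra. Qed.
Lemma b1s : E1b^2 + 1 = 2*Rb*(Rb-m)/u^2 /\ E1b^2 - 1 = -2*m*(Rb-m)/u^2.
Proof. unfold E1b. pose proof HRb. pose proof F2. pose proof u_pos.
 split; field_simplify; try lra; apply Rmult_eq_reg_r with (u^2); try nra;
 field_simplify; try lra; nra. Qed.

Lemma segB : GeodSegment Cb q0 r0.
Proof.
 split; [apply arcYZ_geod; [apply Rb_pos|apply E0b_pos]|].
 pose proof Rb_pos; pose proof u_pos; pose proof E0b_pos; pose proof E1b_pos.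
 destruct b0s as [B1 B2]. destruct b1s as [B3 B4].
 pose proof nums. assert (Rb - m > 0) by (pose proof Rb_bd; lra).
 split; unfold at_time, q0, r0, Cb, db; cbn [cx cy cz arcYZ arcXZ].
 - rewrite EE0. apply pt_eq; auto.
   + rewrite B2, B1. unfold k, m. field. lra.
   + rewrite B1. replace (2 * Rb * E0b / (2 * Rb * E0b)) with 1 by (field; lra). apply ln_1.
 - rewrite EE1 by auto. apply pt_eq; auto.
   + rewrite B3, B4. field. lra.
   + rewrite B3. f_equal. unfold E1b. field. lra.
Qed.

Lemma c0s : E0c^2 + 1 = 2*Rc*u^2*(Rc+P) /\ E0c^2 - 1 = 2*P*u^2*(Rc+P).
Proof. unfold E0c. pose proof HRc. pose proof F3. split; nra. Qed.
Lemma c1s : E1c^2 + 1 = 2*Rc*(Rc-n) /\ E1c^2 - 1 = -2*n*(Rc-n).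
Proof. unfold E1c. pose proof HRc. split; nra. Qed.

Lemma segC : GeodSegment Cc r0 p0.
Proof.
 split; [apply arcXZ_geod; [apply Rc_pos|apply E0c_pos]|].
 pose proof Rc_pos; pose proof u_pos; pose proof E0c_pos; pose proof E1c_pos.
 destruct c0s as [B1 B2]. destruct c1s as [B3 B4].
 pose proof nums. assert (Rc + P > 0) by (pose proof Rc_bd; lra).
 assert (Rc - n > 0) by (unfold E1c in *; lra).
 split; unfold at_time, p0, r0, Cc, dc; cbn [cx cy cz arcYZ arcXZ].
 - rewrite EE0. apply pt_eq; auto.
   + rewrite B2, B1. transitivity (n + P). field. repeat split; nra. unfold n, P; field.
   + rewrite B1. replace (2 * Rc * E0c / (2 * Rc * u^2 * (Rc + P))) with (/ u)
       by (unfold E0c; field; split; lra). rewrite ln_Rinv by lra. ring.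
 - rewrite EE1 by auto. apply pt_eq; auto.
   + rewrite B3, B4. field. split; lra.
   + rewrite B3. replace (2 * Rc * E1c / (2 * Rc * (Rc - n))) with 1
       by (unfold E1c; field; split; lra). rewrite ln_1. ring.
Qed.

Lemma velA0 : vel Ca 0 = sc a (1,1,0).
Proof. unfold vel, sc, px, py, pz; cbn. apply pt_eq; ring. Qed.
Lemma velA1 : neg (vel Ca 1) = sc a (-1,-1,0).
Proof. unfold neg, vel, sc, px, py, pz; cbn. apply pt_eq; ring. Qed.

Lemma velB0 : vel Cb 0 = sc (-db/Rb) (0,-1,k).
Proof.
 pose proof Rb_pos; pose proof E0b_pos. destruct b0s as [B1 B2].
 unfold vel, sc, px, py, pz, Cb; cbn [vx vy vz arcYZ fst snd]. rewrite EE0.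
 apply pt_eq.
 - ring.
 - rewrite B1. field. lra.
 - replace (1 + E0b^2) with (2*Rb*E0b) by lra.
   replace (1 - E0b^2) with (-(2*k*E0b)) by lra. field. lra.
Qed.

Lemma velB1 : neg (vel Cb 1) = sc (-db/Rb) (0, u^2, m).
Proof.
 pose proof Rb_pos; pose proof E1b_pos; pose proof E0b_pos; pose proof u_pos.
 destruct b1s as [B1 B2]. assert (Rb - m > 0) by (pose proof Rb_bd; pose proof nums; lra).
 unfold neg, vel, sc, px, py, pz, Cb; cbn [vx vy vz arcYZ fst snd]. unfold db. rewrite EE1 by auto.
 fold db. apply pt_eq.
 - ring.
 - rewrite B1. unfold E1b. field. lra.
 - replace (1 + E1b^2) with (2*Rb*(Rb-m)/u^2) by lra.
   replace (1 - E1b^2) with (2*m*(Rb-m)/u^2) by lra. field. lra.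
Qed.

Lemma velC0 : vel Cc 0 = sc (-dc/Rc) (-1/u^2, 0, -P).
Proof.
 pose proof Rc_pos; pose proof E0c_pos; pose proof u_pos. destruct c0s as [B1 B2].
 assert (Rc + P > 0) by (pose proof Rc_bd; pose proof nums; lra).
 unfold vel, sc, px, py, pz, Cc; cbn [vx vy vz arcXZ fst snd]. rewrite EE0.
 apply pt_eq.
 - rewrite B1. unfold E0c. field. lra.
 - ring.
 - replace (1 + E0c^2) with (2*Rc*u^2*(Rc+P)) by lra.
   replace (1 - E0c^2) with (-(2*P*u^2*(Rc+P))) by lra. field. lra.
Qed.

Lemma velC1 : neg (vel Cc 1) = sc (-dc/Rc) (1, 0, -n).
Proof.
 pose proof Rc_pos; pose proof E1c_pos; pose proof E0c_pos. destruct c1s as [B1 B2].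
 assert (Rc - n > 0) by (unfold E1c in *; lra).
 unfold neg, vel, sc, px, py, pz, Cc; cbn [vx vy vz arcXZ fst snd]. unfold dc. rewrite EE1 by auto.
 fold dc. apply pt_eq.
 - rewrite B1. unfold E1c. field. lra.
 - ring.
 - replace (1 + E1c^2) with (2*Rc*(Rc-n)) by lra.
   replace (1 - E1c^2) with (2*n*(Rc-n)) by lra. field. lra.
Qed.

Lemma e0 : exp (2 * 0) = 1. Proof. rewrite Rmult_0_r; apply exp_0. Qed.
Lemma e0' : exp (- (2 * 0)) = 1. Proof. rewrite Rmult_0_r, Ropp_0; apply exp_0. Qed.

Lemma angP : sol_angle p0 (vel Ca 0) (neg (vel Cc 1)) = acos (/ (sqrt 2 * Rc)).
Proof.
 rewrite velA0, velC1. pose proof a_bd; pose proof Rc_pos; pose proof dc_neg.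
 assert (N1 : sol_inner p0 (1,1,0) (1,1,0) = 2)
   by (unfold sol_inner, p0, px, py, pz; cbn; rewrite e0, e0'; ring).
 assert (N2 : sol_inner p0 (1,0,-n) (1,0,-n) = 1 + n^2)
   by (unfold sol_inner, p0, px, py, pz; cbn; rewrite e0, e0'; ring).
 assert (N3 : sol_inner p0 (1,1,0) (1,0,-n) = 1)
   by (unfold sol_inner, p0, px, py, pz; cbn; rewrite e0, e0'; ring).
 rewrite angle_sc; try (apply Rdiv_lt_0_compat; lra); try lra; try (rewrite N1; lra);
   try (rewrite N2; nra).
 unfold sol_angle, sol_norm. rewrite N1, N2, N3. fold Rc.
 f_equal. field. split; [lra|]. apply Rgt_not_eq, sqrt_lt_R0; lra.
Qed.

Lemma angQ : sol_angle q0 (vel Cb 0) (neg (vel Ca 1)) = acos (/ (Rb * sqrt 2)).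
Proof.
 rewrite velB0, velA1. pose proof a_bd; pose proof Rb_pos; pose proof db_neg.
 assert (N1 : sol_inner q0 (-1,-1,0) (-1,-1,0) = 2)
   by (unfold sol_inner, q0, px, py, pz; cbn; rewrite e0, e0'; ring).
 assert (N2 : sol_inner q0 (0,-1,k) (0,-1,k) = 1 + k^2)
   by (unfold sol_inner, q0, px, py, pz; cbn; rewrite e0, e0'; ring).
 assert (N3 : sol_inner q0 (0,-1,k) (-1,-1,0) = 1)
   by (unfold sol_inner, q0, px, py, pz; cbn; rewrite e0, e0'; ring).
 rewrite angle_sc; try (apply Rdiv_lt_0_compat; lra); try lra; try (rewrite N1; lra);
   try (rewrite N2; nra).
 unfold sol_angle, sol_norm. rewrite N1, N2, N3. fold Rb.
 f_equal. field. split; [|lra]. apply Rgt_not_eq, sqrt_lt_R0; lra.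
Qed.

Lemma angR : sol_angle r0 (vel Cc 0) (neg (vel Cb 1)) = acos (17/8 / (Rc * Rb)).
Proof.
 rewrite velC0, velB1. pose proof Rc_pos; pose proof Rb_pos; pose proof db_neg; pose proof dc_neg.
 pose proof u_pos. pose proof F2. pose proof F3. pose proof F4. pose proof HRb. pose proof HRc.
 assert (Eu : exp (2 * pz r0) = u^2) by (unfold r0, pz; cbn; apply exp_2ln; lra).
 assert (Eu' : exp (- (2 * pz r0)) = / u^2) by (unfold r0, pz; cbn; apply exp_m2ln; lra).
 assert (N1 : sol_inner r0 (-1/u^2, 0, -P) (-1/u^2, 0, -P) = 1 + n^2).
 { unfold sol_inner. rewrite Eu, Eu'. unfold px, py, pz; cbn. field_simplify; [|lra].
   apply Rmult_eq_reg_r with (u^2); [|nra]. field_simplify; [|lra]. nra. }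
 assert (N2 : sol_inner r0 (0, u^2, m) (0, u^2, m) = 1 + k^2).
 { unfold sol_inner. rewrite Eu, Eu'. unfold px, py, pz; cbn. field_simplify; [|lra]. nra. }
 assert (N3 : sol_inner r0 (-1/u^2, 0, -P) (0, u^2, m) = 17/8).
 { unfold sol_inner. rewrite Eu, Eu'. unfold px, py, pz; cbn. rewrite <- F4. field. lra. }
 rewrite angle_sc; try (apply Rdiv_lt_0_compat; lra); try (rewrite N1; nra); try (rewrite N2; nra).
 unfold sol_angle, sol_norm. rewrite N1, N2, N3. reflexivity.
Qed.

Lemma s2 : sqrt 2 * sqrt 2 = 2. Proof. apply sqrt_sqrt; lra. Qed.

Lemma sq_eq x y : 0 <= y -> x = y * y -> sqrt x = y.
Proof. intros H E. subst. apply sqrt_square. auto. Qed.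

Lemma sumPI : acos (/ (sqrt 2 * Rc)) + acos (/ (Rb * sqrt 2)) + acos (17/8 / (Rc * Rb)) = PI.
Proof.
 pose proof Rc_bd; pose proof Rb_bd. pose proof a_bd; pose proof b_bd.
 pose proof s2. assert (1.41 < sqrt 2 < 1.42).
 { assert (0 <= sqrt 2) by apply sqrt_pos. split; nra. }
 pose proof HRb; pose proof HRc. pose proof F6n; pose proof F6k.
 assert (Hab : 1.93 < a*b < 1.94) by (split; nra).
 apply acos3.
 - split. left; apply Rinv_0_lt_compat; nra.
   rewrite <- Rinv_1. apply Rinv_le_contravar; nra.
 - split. left; apply Rinv_0_lt_compat; nra.
   rewrite <- Rinv_1. apply Rinv_le_contravar; nra.
 - split; [left; apply Rlt_trans with 0; [lra| apply Rdiv_lt_0_compat; nra]|].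
   apply Rmult_le_reg_r with (Rc * Rb); [nra|]. unfold Rdiv. rewrite Rmult_assoc, Rinv_l by nra. nra.
 - rewrite (sq_eq (1 - (/ (sqrt 2 * Rc))²) ((3 + a*b)/(sqrt 2 * Rc))).
   rewrite (sq_eq (1 - (/ (Rb * sqrt 2))²) ((3 - a*b)/(Rb * sqrt 2))).
   + field_simplify; try (split; nra).
     replace (a^2*b^2) with ((a*a)*(b*b)) by ring. rewrite Ha, Hb.
     rewrite pow2_sqrt by lra. field. nra.
   + apply Rdiv_le_0_compat; nra.
   + unfold Rsqr. field_simplify; try nra. rewrite pow2_sqrt by lra.
     replace (Rb^2) with (1+k^2) by (rewrite <- HRb; ring).
     replace (a ^ 2 * b ^ 2 - 6 * a * b + 9) with ((3 - a*b)^2) by ring.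
     rewrite <- F6k. field. nra.
   + apply Rdiv_le_0_compat; nra.
   + unfold Rsqr. field_simplify; try nra. rewrite pow2_sqrt by lra.
     replace (Rc^2) with (1+n^2) by (rewrite <- HRc; ring).
     replace (a ^ 2 * b ^ 2 + 6 * a * b + 9) with ((3 + a*b)^2) by ring.
     rewrite <- F6n. field. nra.
Qed.

Theorem lemma3p4 :
  exists (p q r : pt) (a b c : curve),
    p <> q /\ q <> r /\ r <> p /\
    ~ OnCommonGeodesic p q r /\
    GeodSegment a p q /\ GeodSegment b q r /\ GeodSegment c r p /\
    angle_sum p q r a b c = PI.
Proof.
 exists p0, q0, r0, Ca, Cb, Cc. pose proof a_bd.
 split; [intro E; apply (f_equal px) in E; unfold px, p0, q0 in E; simpl in E; lra|].
 split; [intro E; apply (f_equal py) in E; unfold py, r0, q0 in E; simpl in E; lra|].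
 split; [intro E; apply (f_equal px) in E; unfold px, p0, r0 in E; simpl in E; lra|].
 split.
 { intros [g [t1 [t2 [t3 [Hg [H1 [H2 H3]]]]]]].
   assert (X1 : cx g t1 = 0) by (apply (f_equal px) in H1; exact H1).
   assert (X2 : cx g t2 = a) by (apply (f_equal px) in H2; exact H2).
   assert (X3 : cx g t3 = a) by (apply (f_equal px) in H3; exact H3).
   assert (Hn : t2 <> t3).
   { intro E. subst t3. rewrite H2 in H3. apply (f_equal py) in H3.
     unfold py, q0, r0 in H3; simpl in H3. lra. }
   pose proof (x_rigid g t1 t2 t3 Hg ltac:(congruence) Hn). lra. }
 split; [apply segA|]. split; [apply segB|]. split; [apply segC|].
 unfold angle_sum. rewrite angP, angQ, angR. apply sumPI.
Qed.
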